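(* Let $\mathfrak{A}[\tau]$ be a topological partial *-algebra with multiplication core $\mathfrak{B}$, and let $\omega$ be a $\tau$-continuous, $\mathfrak{B}$-positive linear functional on $\mathfrak{A}$. Then the map $\lambda^0_\omega:a\in\mathfrak{B}\mapsto\lambda^0_\omega(a)\in\mathcal{H}_\omega$ is $\tau^*$-closable; that is, whenever $\{a_\delta\}\subset\mathfrak{B}$ is a net with $a_\delta\to0$ in $\tau^*$ and $\{\lambda^0_\omega(a_\delta)\}$ is a Cauchy net in $\mathcal{H}_\omega$, then $\lambda^0_\omega(a_\delta)\to0$.
   Context: A partial *-algebra is a complex vector space $\mathfrak{A}$ with conjugate-linear involution and distributive partial multiplication on $\Gamma\subset\mathfrak{A}\times\mathfrak{A}$ with $(x,y)\in\Gamma$ iff $(y^*,x^* )\in\Gamma$, then $(xy)^*=y^*x^*$; $R(x)=\{y:(x,y)\in\Gamma\}$; $R\mathfrak{A}$ is the set of universal right multipliers. A topological partial *-algebra: Hausdorff locally convex topology $\tau$ such that each map $y\in R(x)\mapsto xy$ is closed (if $y_\alpha\in R(x)$, $y_\alpha\to y$, $xy_\alpha\to z$, then $y\in R(x)$, $z=xy$). $\tau^*$ is the topology given by the seminorms $\max\{p(x),p(x^* )\}$, $p$ a $\tau$-continuous seminorm. A multiplication core is a subspace $\mathfrak{B}\subseteq R\mathfrak{A}$ with: $e\in\mathfrak{B}$ if $\mathfrak{A}$ has a unit $e$; $\mathfrak{B}\mathfrak{B}\subseteq\mathfrak{B}$; $\mathfrak{B}$ $\tau^*$-dense in $\mathfrak{A}$;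 $x\mapsto xb$ $\tau$-continuous for $b\in\mathfrak{B}$; $b^*(xc)=(b^*x)c$ for $x\in\mathfrak{A}$, $b,c\in\mathfrak{B}$. A linear functional $\omega$ is $\mathfrak{B}$-positive if $\omega(a^*a)\ge0$ for all $a\in\mathfrak{B}$. Then $N_\omega=\{x\in\mathfrak{B}:\omega(y^*x)=0\ \forall y\in\mathfrak{B}\}$, $\lambda^0_\omega(x)=x+N_\omega$ ($x\in\mathfrak{B}$), and $\mathcal{H}_\omega$ is the Hilbert space completion of $\mathfrak{B}/N_\omega$ with inner product $\langle\lambda^0_\omega(x),\lambda^0_\omega(y)\rangle=\omega(y^*x)$. *)

(* Defs.v *)
From mathcomp Require Import all_boot all_order all_algebra complex reals.
Import Order.TTheory GRing.Theory Num.Theory.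
Set Implicit Arguments.
Unset Strict Implicit.
Unset Printing Implicit Defensive.
Local Open Scope ring_scope.

Definition directed (D : Type) (le : D -> D -> Prop) : Prop :=
  (exists d : D, True) /\ (forall a, le a a) /\
  (forall a b c, le a b -> le b c -> le a c) /\
  (forall a b, exists c, le a c /\ le b c).

Definition eventually (D : Type) (le : D -> D -> Prop) (P : D -> Prop) : Prop :=
  exists d0, forall d, le d0 d -> P d.

Definition rconv (R : realType) (D : Type) (le : D -> D -> Prop)
  (xs : D -> R) (x : R) : Prop :=
  forall e : R, 0 < e -> eventually le (fun d => `|xs d - x| < e).

Definition cconv (R : realType) (D : Type) (le : D -> D -> Prop)
  (zs : D -> R[i]) (z : R[i]) : Prop :=
  forall e : R, 0 < e -> eventually le (fun d => `|zs d - z| < (e%:C)%C).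

Definition is_seminorm (R : realType) (A : lmodType R[i]) (q : A -> R) : Prop :=
  (forall x y, q (x + y) <= q x + q y) /\
  (forall (a : R[i]) x, ((q (a *: x))%:C)%C = `|a| * ((q x)%:C)%C).

(* The Hausdorff locally convex topology tau on A generated by the
   family of seminorms (p i)_{i : I}. *)
Definition is_lc_hausdorff (R : realType) (A : lmodType R[i])
  (I : Type) (p : I -> A -> R) : Prop :=
  (forall i, is_seminorm (p i)) /\
  (forall x : A, (forall i, p i x = 0) -> x = 0).

Definition tconv (R : realType) (A : lmodType R[i]) (I : Type)
  (p : I -> A -> R) (D : Type) (le : D -> D -> Prop)
  (xs : D -> A) (x : A) : Prop :=
  forall i, rconv le (fun d => p i (xs d - x)) 0.

Definition tcont_AA (R : realType) (A : lmodType R[i]) (I : Type)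
  (p : I -> A -> R) (f : A -> A) : Prop :=
  forall (D : Type) (le : D -> D -> Prop) (xs : D -> A) (x : A),
    directed le -> tconv p le xs x -> tconv p le (fun d => f (xs d)) (f x).

Definition tcont_AR (R : realType) (A : lmodType R[i]) (I : Type)
  (p : I -> A -> R) (f : A -> R) : Prop :=
  forall (D : Type) (le : D -> D -> Prop) (xs : D -> A) (x : A),
    directed le -> tconv p le xs x -> rconv le (fun d => f (xs d)) (f x).

Definition tcont_AC (R : realType) (A : lmodType R[i]) (I : Type)
  (p : I -> A -> R) (f : A -> R[i]) : Prop :=
  forall (D : Type) (le : D -> D -> Prop) (xs : D -> A) (x : A),
    directed le -> tconv p le xs x -> cconv le (fun d => f (xs d)) (f x).

Definition tstar_conv (R : realType) (A : lmodType R[i]) (I : Type)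
  (p : I -> A -> R) (inv : A -> A) (D : Type) (le : D -> D -> Prop)
  (xs : D -> A) (x : A) : Prop :=
  forall q : A -> R, is_seminorm q -> tcont_AR p q ->
    rconv le (fun d => Num.max (q (xs d - x)) (q (inv (xs d - x)))) 0.

(* inv = involution x |-> x^*, Gam = the set Gamma of composable pairs,
   pmul x y = the product xy (meaningful only when Gam x y). *)
Definition is_partial_star_algebra (R : realType) (A : lmodType R[i])
  (inv : A -> A) (Gam : A -> A -> Prop) (pmul : A -> A -> A) : Prop :=
  (forall (a : R[i]) x y, inv (a *: x + y) = a^* *: inv x + inv y) /\
  (forall x, inv (inv x) = x) /\
  (forall x y, Gam x y <-> Gam (inv y) (inv x)) /\
  (forall x y1 y2 (a b : R[i]), Gam x y1 -> Gam x y2 ->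
     Gam x (a *: y1 + b *: y2) /\
     pmul x (a *: y1 + b *: y2) = a *: pmul x y1 + b *: pmul x y2) /\
  (forall x1 x2 y (a b : R[i]), Gam x1 y -> Gam x2 y ->
     Gam (a *: x1 + b *: x2) y /\
     pmul (a *: x1 + b *: x2) y = a *: pmul x1 y + b *: pmul x2 y) /\
  (forall x y, Gam x y -> inv (pmul x y) = pmul (inv y) (inv x)).

Definition right_mult (A : Type) (Gam : A -> A -> Prop) (x : A) : A -> Prop :=
  fun y => Gam x y.
Definition univ_right_mult (A : Type) (Gam : A -> A -> Prop) : A -> Prop :=
  fun y => forall x, Gam x y.

Definition is_unit (A : Type) (Gam : A -> A -> Prop) (pmul : A -> A -> A)
  (e : A) : Prop :=
  forall x, Gam e x /\ Gam x e /\ pmul e x = x /\ pmul x e = x.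

Definition is_topological_psa (R : realType) (A : lmodType R[i])
  (inv : A -> A) (Gam : A -> A -> Prop) (pmul : A -> A -> A)
  (I : Type) (p : I -> A -> R) : Prop :=
  is_partial_star_algebra inv Gam pmul /\
  is_lc_hausdorff p /\
  (forall (x : A) (D : Type) (le : D -> D -> Prop) (ys : D -> A) (y z : A),
     directed le -> (forall d, right_mult Gam x (ys d)) ->
     tconv p le ys y -> tconv p le (fun d => pmul x (ys d)) z ->
     right_mult Gam x y /\ z = pmul x y).

Definition is_multiplication_core (R : realType) (A : lmodType R[i])
  (inv : A -> A) (Gam : A -> A -> Prop) (pmul : A -> A -> A)
  (I : Type) (p : I -> A -> R) (B : A -> Prop) : Prop :=
  B 0 /\ (forall (a : R[i]) x y, B x -> B y -> B (a *: x + y)) /\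
  (forall x, B x -> univ_right_mult Gam x) /\
  (forall e, is_unit Gam pmul e -> B e) /\
  (forall x y, B x -> B y -> B (pmul x y)) /\
  (forall x : A, exists (D : Type) (le : D -> D -> Prop) (xs : D -> A),
     directed le /\ (forall d, B (xs d)) /\ tstar_conv p inv le xs x) /\
  (forall b, B b -> tcont_AA p (fun x => pmul x b)) /\
  (forall x b c, B b -> B c ->
     pmul (inv b) (pmul x c) = pmul (pmul (inv b) x) c).

Definition is_linear_functional (R : realType) (A : lmodType R[i])
  (omega : A -> R[i]) : Prop :=
  forall (a : R[i]) x y, omega (a *: x + y) = a * omega x + omega y.

Definition B_positive (R : realType) (A : lmodType R[i])
  (inv : A -> A) (pmul : A -> A -> A) (B : A -> Prop) (omega : A -> R[i]) : Prop :=
  forall a, B a -> 0 <= omega (pmul (inv a) a).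

(* The norm in H_omega of lambda^0_omega(a) = a + N_omega, a in B:
   ||lambda^0_omega(a)|| = <lambda^0_omega(a), lambda^0_omega(a)>^(1/2)
                         = omega(a^* a)^(1/2).
   Since lambda^0_omega is linear, the H_omega-distance between
   lambda^0_omega(a) and lambda^0_omega(b) is lambda0_norm (a - b). *)
Definition lambda0_norm (R : realType) (A : lmodType R[i])
  (inv : A -> A) (pmul : A -> A -> A) (omega : A -> R[i]) (a : A) : R :=
  Num.sqrt (complex.Re (omega (pmul (inv a) a))).

Definition lambda0_cauchy (R : realType) (A : lmodType R[i])
  (inv : A -> A) (pmul : A -> A -> A) (omega : A -> R[i])
  (D : Type) (le : D -> D -> Prop) (xs : D -> A) : Prop :=
  forall e : R, 0 < e -> exists d0, forall d d', le d0 d -> le d0 d' ->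
    lambda0_norm inv pmul omega (xs d - xs d') < e.

Definition lambda0_to0 (R : realType) (A : lmodType R[i])
  (inv : A -> A) (pmul : A -> A -> A) (omega : A -> R[i])
  (D : Type) (le : D -> D -> Prop) (xs : D -> A) : Prop :=
  forall e : R, 0 < e -> eventually le (fun d => lambda0_norm inv pmul omega (xs d) < e).

(* Main.v *)
Require Import Defs.
From mathcomp Require Import all_boot all_order all_algebra complex reals.
From mathcomp Require Import ring lra.
Import Order.TTheory GRing.Theory Num.Theory.
Set Implicit Arguments.
Local Open Scope ring_scope.

Lemma conj_i (R : realType) : Num.conj ('i%C : R[i]) = - 'i%C.
Proof. change (Num.conj _) with (conjc ('i%C : R[i])). rewrite /conjc /=. congr Complex. by rewrite oppr0. Qed.

Lemma ge0_ReIm (R : realType) (z : R[i]) : 0 <= z -> complex.Im z = 0 /\ 0 <= complex.Re z.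
Proof. rewrite lecE /= => /andP[/eqP h1 h2]; by split. Qed.

Lemma key_cplx (R : realType) (al be ga de : R[i]) :
  0 <= al + 'i%C * be + - 'i%C * ga + de -> 0 <= al -> 0 <= de ->
  complex.Re (al - be - ga + de) = complex.Re al - 2 * complex.Re ga + complex.Re de.
Proof.
case: al => a1 a2; case: be => b1 b2; case: ga => g1 g2; case: de => d1 d2.
move=> /ge0_ReIm [h1 _] /ge0_ReIm [h2 _] /ge0_ReIm [h3 _].
move: h1 h2 h3 => /=. move=> h1 h2 h3. lra.
Qed.

Lemma Re_le_norm (R : realType) (z : R[i]) (eta : R) :
  `|z| < (eta%:C)%C -> complex.Re z < eta.
Proof.
rewrite normc_def ltcR => h.
have h0 := sqrtr_ge0 (complex.Re z ^+ 2 + complex.Im z ^+ 2).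
have hs := sqr_sqrtr (addr_ge0 (sqr_ge0 (complex.Re z)) (sqr_ge0 (complex.Im z))).
set s := Num.sqrt _ in h h0 hs.
have := sqr_ge0 (complex.Im z). nra.
Qed.
Section SN.
Variables (R : realType) (A : lmodType R[i]) (q : A -> R).
Hypothesis Hq : is_seminorm q.

Lemma sn0 : q 0 = 0.
Proof.
have := Hq.2 0 0. rewrite scale0r normr0 mul0r => /(congr1 (@complex.Re R)) /=.
done.
Qed.

Lemma snN x : q (- x) = q x.
Proof.
have := Hq.2 (-1) x. rewrite scaleN1r normrN1 mul1r => /(congr1 (@complex.Re R)) /=.
done.
Qed.

Lemma sn_ge0 x : 0 <= q x.
Proof. have := Hq.1 x (- x). rewrite subrr sn0 snN. lra. Qed.

Lemma sn_lip x y : `|q x - q y| <= q (x - y).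
Proof.
have h1 := Hq.1 (x - y) y. have h2 := Hq.1 (y - x) x.
rewrite subrK in h1. rewrite subrK -opprB snN in h2.
rewrite ler_norml. apply/andP; split; lra.
Qed.
End SN.

Lemma tcont_p (R : realType) (A : lmodType R[i]) (I : Type) (p : I -> A -> R) i :
  is_lc_hausdorff p -> tcont_AR p (p i).
Proof.
move=> Hlc D le xs x _ Hc e he.
have [d0 Hd0] := Hc i e he. exists d0 => d /Hd0.
rewrite subr0 ger0_norm; last exact: (sn_ge0 (Hlc.1 i)).
move=> hlt; have := sn_lip (Hlc.1 i) (xs d) x. rewrite ler_norml ltr_norml => /andP[? ?]; apply/andP; split; lra.
Qed.
Section Alg.
Variables (R : realType) (A : lmodType R[i]) (inv : A -> A) (Gam : A -> A -> Prop)
  (pmul : A -> A -> A) (B : A -> Prop) (omega : A -> R[i]).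
Hypothesis Hpsa : is_partial_star_algebra inv Gam pmul.
Hypothesis HBuniv : forall x, B x -> univ_right_mult Gam x.
Hypothesis Hom : is_linear_functional omega.

Lemma om0 : omega 0 = 0.
Proof. have := Hom 1 0 0. rewrite scale1r addr0 mul1r => /(congr1 (fun z => z - omega 0)). by rewrite subrr addrK. Qed.

Lemma omD x y : omega (x + y) = omega x + omega y.
Proof. by rewrite -{1}(scale1r x) Hom mul1r. Qed.

Lemma omZ a x : omega (a *: x) = a * omega x.
Proof. by rewrite -(addr0 (a *: x)) Hom om0 addr0. Qed.

Lemma inv0 : inv 0 = 0.
Proof.
have := Hpsa.1 1 0 0. rewrite scale1r addr0 rmorph1 scale1r => /(congr1 (fun z => z - inv 0)).
by rewrite subrr addrK.
Qed.

Lemma invZ a x : inv (a *: x) = Num.conj a *: inv x.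
Proof. by rewrite -(addr0 (a *: x)) Hpsa.1 inv0 addr0. Qed.

Lemma pmul0 y : Gam 0 y -> pmul 0 y = 0.
Proof.
move=> h. have [_ E] := Hpsa.2.2.2.2.1 0 0 y 0 0 h h.
by move: E; rewrite !scale0r addr0.
Qed.

Lemma expand u v a b : B u -> B v ->
  omega (pmul (inv (a *: u + b *: v)) (a *: u + b *: v)) =
  Num.conj a * a * omega (pmul (inv u) u) + Num.conj a * b * omega (pmul (inv u) v)
  + Num.conj b * a * omega (pmul (inv v) u) + Num.conj b * b * omega (pmul (inv v) v).
Proof.
move=> Bu Bv.
have [Hinv [_ [_ [Hr [Hl _]]]]] := Hpsa.
rewrite Hinv invZ.
have Gw : forall x, Gam x (a *: u + b *: v).
  move=> x.
  have [G _] := Hr x u v a b (HBuniv Bu x) (HBuniv Bv x). exact: G.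
have [_ ->] := Hl (inv u) (inv v) (a *: u + b *: v) (Num.conj a) (Num.conj b) (Gw _) (Gw _).
have [_ ->] := Hr (inv u) u v a b (HBuniv Bu _) (HBuniv Bv _).
have [_ ->] := Hr (inv v) u v a b (HBuniv Bu _) (HBuniv Bv _).
rewrite !omD !omZ !omD !omZ. ring.
Qed.
End Alg.



Theorem proposition4p9 (R : realType) (A : lmodType R[i])
  (inv : A -> A) (Gam : A -> A -> Prop) (pmul : A -> A -> A)
  (I : Type) (p : I -> A -> R) (B : A -> Prop) (omega : A -> R[i]) :
  is_topological_psa inv Gam pmul p ->
  is_multiplication_core inv Gam pmul p B ->
  is_linear_functional omega ->
  tcont_AC p omega ->
  B_positive inv pmul B omega ->
  forall (D : Type) (le : D -> D -> Prop) (a : D -> A),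
    directed le ->
    (forall d, B (a d)) ->
    tstar_conv p inv le a 0 ->
    lambda0_cauchy inv pmul omega le a ->
    lambda0_to0 inv pmul omega le a.
Proof.
move=> [Hpsa [Hlc _]] [HB0 [HBlin [HBuniv [_ [_ [_ [Hrcont _]]]]]]] Hom HomC Hpos.
move=> D le a Hdir HBa Hstar Hcauchy e he.
have he2 : 0 < e / 2 by lra.
have [d0 Hd0] := Hcauchy (e / 2) he2.
exists d0 => d Hd.
set u := a d.
have Hinvc : tconv p le (fun d' => inv (a d')) 0.
  move=> i e' he'.
  have [d1 H1] := Hstar (p i) (Hlc.1 i) (tcont_p i Hlc) e' he'.
  exists d1 => d' /H1. rewrite !subr0.
  have g1 := sn_ge0 (Hlc.1 i) (a d'). have g2 := sn_ge0 (Hlc.1 i) (inv (a d')).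
  rewrite !ger0_norm //; last by rewrite le_max g1.
  by rewrite gt_max => /andP[].
have Hg := Hrcont u (HBa d) D le _ 0 Hdir Hinvc.
have Hg2 := HomC D le (fun d => pmul (inv (a d)) u) (pmul 0 u) Hdir Hg.
rewrite /= (pmul0 Hpsa _ (HBuniv _ (HBa d) 0)) (om0 Hom) in Hg2.
have heta : 0 < e ^+ 2 / 4 by rewrite divr_gt0 // exprn_gt0.
have [d2 Hd2] := Hg2 _ heta.
have [_ [_ [_ Hdir4]]] := Hdir.
have [d' [Hd0' Hd2']] := Hdir4 d0 d2.
have hga := @Re_le_norm _ _ _ (Hd2 _ Hd2'). rewrite subr0 in hga.
have hc := Hd0 _ _ Hd Hd0'.
set v := a d' in hga hc.
have Bu : B u := HBa d. have Bv : B v := HBa d'.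
have Bc : forall c1 c2, B (c1 *: u + c2 *: v).
  move=> c1 c2. apply: (HBlin) => //. rewrite -[_ *: v]addr0. exact: (HBlin).
set al := omega (pmul (inv u) u). set be := omega (pmul (inv u) v).
set ga := omega (pmul (inv v) u). set de := omega (pmul (inv v) v).
have hi : ('i%C : R[i]) * 'i%C = -1 by rewrite -expr2 sqr_i.
have E1 : omega (pmul (inv (u - v)) (u - v)) = al - be - ga + de.
  have -> : u - v = 1 *: u + (-1) *: v by rewrite scale1r scaleN1r.
  rewrite (expand _ Hpsa HBuniv Hom _ _ _ _ Bu Bv) rmorph1 rmorphN1 -/al -/be -/ga -/de. ring.
have E2 : omega (pmul (inv (1 *: u + 'i%C *: v)) (1 *: u + 'i%C *: v))
    = al + 'i%C * be + - 'i%C * ga + de.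
  rewrite (expand _ Hpsa HBuniv Hom _ _ _ _ Bu Bv) rmorph1 conj_i -/al -/be -/ga -/de.
  transitivity (al + 'i%C * be + - 'i%C * ga + (- ('i%C * 'i%C)) * de); first ring.
  by rewrite hi opprK mul1r.
have Pal : 0 <= al := Hpos u Bu. have Pde : 0 <= de := Hpos v Bv.
have P2 := Hpos _ (Bc 1 'i%C). rewrite E2 in P2.
have K := @key_cplx _ _ _ _ _ P2 Pal Pde.
have [_ Rde] := @ge0_ReIm _ _ Pde. have [_ Ral] := @ge0_ReIm _ _ Pal.
move: hc. rewrite /lambda0_norm E1 K => hc.
set X := complex.Re al - 2 * complex.Re ga + complex.Re de in hc.
have hX : X < e ^+ 2 / 4.
  case: (lerP X 0) => hX0; first by have := sqr_ge0 e; lra.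
  have := sqr_sqrtr (ltW hX0). have := sqrtr_ge0 X. set s := Num.sqrt X in hc *. nra.
rewrite /lambda0_norm -/al.
have := sqr_sqrtr Ral. have := sqrtr_ge0 (complex.Re al).
set s := Num.sqrt _. rewrite /X in hX. nra.
Qed.
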